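(* Let $\Gamma$ and $\Delta$ be LJB-contexts, $A$ a formula and $V$ a set of variables such that $A$ has no free variable in $V$. Let $\Sigma_1\vdash E_1$ be a flattening of the LJB-sequent $\Gamma,[\Delta]_V\vdash A$ and $\Sigma_2\vdash E_2$ a flattening of $[\Gamma]_V,\Delta\vdash A$. Then $\Sigma_1\vdash E_1$ and $\Sigma_2\vdash E_2$ are $\overline{\alpha}$-equivalent.
   Context: Formulas of minimal predicate logic: $A ::= P(t_1,\dots,t_n)\mid A\rightarrow A\mid \forall x\,A$ with first-order terms $t ::= x\mid f(t_1,\dots,t_n)$. LJ$^{+}$-sequent: finite multiset of formulas $\vdash$ formula. LJB-contexts and items: an LJB-context is a finite multiset of items; an item is a formula or $[\Gamma]_V$ with $V$ a finite set of variables (bound by the bracket) and $\Gamma$ an LJB-context; $FV([\Gamma]_V)=FV(\Gamma)\setminus V$. An LJB-sequent $\Gamma\vdash A$ is an LJB-context and a formula. A fresh $\alpha$-variant of an LJB-sequent is an $\alpha$-equivalent LJB-sequent (renaming variables bound by quantifiers or brackets) in which bound variables are pairwise distinct and distinct from free variables; a flattening of an LJB-sequent is an LJ$^{+}$-sequent obtained by erasing all brackets in a fresh $\alpha$-variant of it. Two LJ$^{+}$-sequents $\Gamma\vdash A$ and $\Gamma'\vdash A'$ are $\overline{\alpha}$-equivalent if there exist substitutions $\sigma,\sigma'$ (renamings of variables, so that the two sequents differ only by names of bound and free variables) such that $\sigma(\Gamma\vdash A)$ is $\alpha$-equivalent to $\Gamma'\vdash A'$ and $\sigma'(\Gamma'\vdash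 A')$ is $\alpha$-equivalent to $\Gamma\vdash A$. *)

(* Defs.v *)
From Stdlib Require Import List Permutation Arith.
Import ListNotations.

Definition var := nat.

Inductive term : Type :=
| Var : var -> term
| Fn : nat -> list term -> term.

Inductive formula : Type :=
| Pred : nat -> list term -> formula
| Imp : formula -> formula -> formula
| All : var -> formula -> formula.

(* An item is a formula or a bracket [Gamma]_V; an LJB-context is a finite
   multiset of items, represented as a list considered up to permutation.
   The finite set V is represented by a list (considered as a set). *)
Inductive item : Type :=
| IForm : formula -> item
| IBr : list var -> list item -> item.

Definition ljb_context := list item.
Definition ljb_sequent := (list item * formula)%type.
Definition ljp_sequent := (list formula * formula)%type.

Fixpoint fv_term (t : term) : list var :=
  match t with
  | Var x => [x]
  | Fn _ ts => (fix go (ts : list term) : list var :=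
                 match ts with [] => [] | t :: ts => fv_term t ++ go ts end) ts
  end.

Fixpoint fv_form (A : formula) : list var :=
  match A with
  | Pred _ ts => flat_map fv_term ts
  | Imp A B => fv_form A ++ fv_form B
  | All x A => filter (fun y => negb (Nat.eqb y x)) (fv_form A)
  end.

Definition mem_var (x : var) (V : list var) : bool := existsb (Nat.eqb x) V.

Fixpoint fv_item (i : item) : list var :=
  match i with
  | IForm A => fv_form A
  | IBr V G => filter (fun y => negb (mem_var y V))
                 ((fix go (G : list item) : list var :=
                     match G with [] => [] | i :: G => fv_item i ++ go G end) G)
  end.

Definition fv_ctx (G : list item) : list var := flat_map fv_item G.

Definition fv_seq (S : ljb_sequent) : list var := fv_ctx (fst S) ++ fv_form (snd S).

Fixpoint bv_form (A : formula) : list var :=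
  match A with
  | Pred _ _ => []
  | Imp A B => bv_form A ++ bv_form B
  | All x A => x :: bv_form A
  end.

Fixpoint bv_item (i : item) : list var :=
  match i with
  | IForm A => bv_form A
  | IBr V G => V ++ (fix go (G : list item) : list var :=
                       match G with [] => [] | i :: G => bv_item i ++ go G end) G
  end.

Definition bv_ctx (G : list item) : list var := flat_map bv_item G.

Definition bv_seq (S : ljb_sequent) : list var := bv_ctx (fst S) ++ bv_form (snd S).

(* ---------- alpha-equivalence modulo a renaming sigma of free variables ----
   [alpha_* sigma env X Y] holds iff sigma(X) (capture-avoiding application of
   the variable renaming sigma to the free variables of X) is alpha-equivalent
   to Y, where env records the correspondence of the bound variables currently
   in scope (innermost first). *)
Definition env := list (var * var).

Fixpoint var_ok (sigma : var -> var) (e : env) (x y : var) : Prop :=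
  match e with
  | [] => y = sigma x
  | (a, b) :: e' => (a = x /\ b = y) \/ (a <> x /\ b <> y /\ var_ok sigma e' x y)
  end.

Fixpoint alpha_term (sigma : var -> var) (e : env) (t u : term) : Prop :=
  match t, u with
  | Var x, Var y => var_ok sigma e x y
  | Fn f ts, Fn g us =>
      f = g /\
      (fix go (ts us : list term) : Prop :=
         match ts, us with
         | [], [] => True
         | t :: ts, u :: us => alpha_term sigma e t u /\ go ts us
         | _, _ => False
         end) ts us
  | _, _ => False
  end.

Fixpoint alpha_form (sigma : var -> var) (e : env) (A B : formula) : Prop :=
  match A, B with
  | Pred p ts, Pred q us =>
      p = q /\ length ts = length us /\
      Forall2 (alpha_term sigma e) ts us
  | Imp A1 A2, Imp B1 B2 => alpha_form sigma e A1 B1 /\ alpha_form sigma e A2 B2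
  | All x A, All y B => alpha_form sigma ((x, y) :: e) A B
  | _, _ => False
  end.

Definition bijection_between (m : env) (V V' : list var) : Prop :=
  NoDup (map fst m) /\ NoDup (map snd m) /\
  (forall x, In x V <-> In x (map fst m)) /\
  (forall y, In y V' <-> In y (map snd m)).

Inductive alpha_item (sigma : var -> var) : env -> item -> item -> Prop :=
| ai_form : forall e A B,
    alpha_form sigma e A B -> alpha_item sigma e (IForm A) (IForm B)
| ai_br : forall e V V' G G' m,
    bijection_between m V V' ->
    alpha_ctx sigma (m ++ e) G G' ->
    alpha_item sigma e (IBr V G) (IBr V' G')
(* contexts are multisets: compare up to permutation *)
with alpha_ctx (sigma : var -> var) : env -> list item -> list item -> Prop :=
| ac_perm : forall e G G1 G',
    alpha_list sigma e G G1 -> Permutation G1 G' -> alpha_ctx sigma e G G'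
with alpha_list (sigma : var -> var) : env -> list item -> list item -> Prop :=
| al_nil : forall e, alpha_list sigma e [] []
| al_cons : forall e i j G G',
    alpha_item sigma e i j -> alpha_list sigma e G G' ->
    alpha_list sigma e (i :: G) (j :: G').

Definition alpha_seq_sub (sigma : var -> var) (S S' : ljb_sequent) : Prop :=
  alpha_ctx sigma [] (fst S) (fst S') /\ alpha_form sigma [] (snd S) (snd S').

Definition alpha_seq (S S' : ljb_sequent) : Prop := alpha_seq_sub (fun x => x) S S'.

Definition fresh_variant (S S' : ljb_sequent) : Prop :=
  alpha_seq S S' /\
  NoDup (bv_seq S') /\
  (forall x, In x (bv_seq S') -> ~ In x (fv_seq S')).

Fixpoint erase_item (i : item) : list formula :=
  match i with
  | IForm A => [A]
  | IBr _ G => (fix go (G : list item) : list formula :=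
                  match G with [] => [] | i :: G => erase_item i ++ go G end) G
  end.

Definition erase_ctx (G : list item) : list formula := flat_map erase_item G.

Definition is_flattening (S : ljb_sequent) (F : ljp_sequent) : Prop :=
  exists S', fresh_variant S S' /\ F = (erase_ctx (fst S'), snd S').

Definition lift_seq (F : ljp_sequent) : ljb_sequent := (map IForm (fst F), snd F).

Definition abar_equiv (F F' : ljp_sequent) : Prop :=
  exists sigma sigma' : var -> var,
    alpha_seq_sub sigma (lift_seq F) (lift_seq F') /\
    alpha_seq_sub sigma' (lift_seq F') (lift_seq F).

(* Main.v *)
Require Import Defs.
From Stdlib Require Import List Permutation Arith Lia.
Import ListNotations.

Lemma perm_fm {A B} (g : A -> list B) l l' : Permutation l l' -> Permutation (flat_map g l) (flat_map g l').
Proof. intro H. apply Permutation_flat_map. exact H. Qed.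

Fixpoint term_ind' (P : term -> Prop) (HV : forall x, P (Var x))
  (HF : forall f ts, Forall P ts -> P (Fn f ts)) (t : term) : P t :=
  match t with
  | Var x => HV x
  | Fn f ts => HF f ts ((fix go (ts : list term) : Forall P ts :=
      match ts with [] => Forall_nil _ | t :: ts => Forall_cons _ (term_ind' P HV HF t) (go ts) end) ts)
  end.

Fixpoint item_ind' (P : item -> Prop) (HA : forall A, P (IForm A))
  (HB : forall V G, Forall P G -> P (IBr V G)) (i : item) : P i :=
  match i with
  | IForm A => HA A
  | IBr V G => HB V G ((fix go (G : list item) : Forall P G :=
      match G with [] => Forall_nil _ | i :: G => Forall_cons _ (item_ind' P HA HB i) (go G) end) G)
  end.

Lemma fv_Fn f ts : fv_term (Fn f ts) = flat_map fv_term ts.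
Proof. simpl. induction ts; simpl; auto. Qed.

Lemma alpha_Fn s e f ts g us : alpha_term s e (Fn f ts) (Fn g us) <-> f = g /\ Forall2 (alpha_term s e) ts us.
Proof.
  simpl. split; intros [-> H]; split; auto; revert us H.
  - induction ts; destruct us; simpl; intros H; try tauto; constructor; try tauto. apply IHts; tauto.
  - induction ts; destruct us; simpl; intros H; inversion H; subst; auto. split; auto. apply IHts; auto.
Qed.

Lemma fv_IBr V G : fv_item (IBr V G) = filter (fun y => negb (mem_var y V)) (fv_ctx G).
Proof. simpl; try reflexivity; f_equal; induction G; simpl; auto. Qed.

Lemma bv_IBr V G : bv_item (IBr V G) = V ++ bv_ctx G.
Proof. simpl; try reflexivity; f_equal; induction G; simpl; auto. Qed.

Lemma erase_IBr V G : erase_item (IBr V G) = erase_ctx G.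
Proof. simpl; try reflexivity; induction G; simpl; auto. Qed.

Lemma mem_var_false x V : mem_var x V = false <-> ~ In x V.
Proof.
  unfold mem_var. induction V; simpl. tauto.
  destruct (Nat.eqb_spec x a); simpl.
  - subst. split; [discriminate| tauto].
  - rewrite IHV. intuition.
Qed.

Lemma in_fv_IBr x V G : In x (fv_item (IBr V G)) <-> In x (fv_ctx G) /\ ~ In x V.
Proof.
  rewrite fv_IBr, filter_In, <- mem_var_false. destruct (mem_var x V); simpl; intuition congruence.
Qed.

Lemma in_fv_All x y A : In x (fv_form (All y A)) <-> In x (fv_form A) /\ x <> y.
Proof.
  simpl. rewrite filter_In. destruct (Nat.eqb_spec x y); simpl; intuition congruence.
Qed.

Lemma var_ok_app s m e x y : var_ok s (m ++ e) x y ->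
  In (x, y) m \/ (~ In x (map fst m) /\ ~ In y (map snd m) /\ var_ok s e x y).
Proof.
  induction m as [|[a b] m IH]; simpl; auto.
  intros [[-> ->]|[Ha [Hb H]]]; auto.
  destruct (IH H) as [H'|[H1 [H2 H3]]]; auto.
  right. intuition.
Qed.

Fixpoint lk (m : env) (x : var) : option var :=
  match m with [] => None | (a, b) :: m' => if Nat.eqb a x then Some b else lk m' x end.
Fixpoint rlk (m : env) (y : var) : option var :=
  match m with [] => None | (a, b) :: m' => if Nat.eqb b y then Some a else rlk m' y end.

Lemma lk_in m x y : NoDup (map fst m) -> In (x, y) m -> lk m x = Some y.
Proof.
  induction m as [|[a b] m IH]; simpl; [tauto|]. intros Hn Hin. inversion Hn; subst.
  destruct Hin as [E|Hin].
  - inversion E; subst. rewrite Nat.eqb_refl. auto.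
  - destruct (Nat.eqb_spec a x); subst; auto.
    exfalso. apply H1. apply (in_map fst) in Hin. exact Hin.
Qed.
Lemma lk_notin m x : ~ In x (map fst m) -> lk m x = None.
Proof.
  induction m as [|[a b] m IH]; simpl; auto. intros H.
  destruct (Nat.eqb_spec a x); subst; auto. tauto.
Qed.
Lemma rlk_in m x y : NoDup (map snd m) -> In (x, y) m -> rlk m y = Some x.
Proof.
  induction m as [|[a b] m IH]; simpl; [tauto|]. intros Hn Hin. inversion Hn; subst.
  destruct Hin as [E|Hin].
  - inversion E; subst. rewrite Nat.eqb_refl. auto.
  - destruct (Nat.eqb_spec b y); subst; auto.
    exfalso. apply H1. apply (in_map snd) in Hin. exact Hin.
Qed.
Lemma rlk_notin m y : ~ In y (map snd m) -> rlk m y = None.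
Proof.
  induction m as [|[a b] m IH]; simpl; auto. intros H.
  destruct (Nat.eqb_spec b y); subst; auto. tauto.
Qed.

Lemma Forall2_comb {A B C} (R : A -> B -> Prop) (S : A -> C -> Prop) (T : B -> C -> Prop) :
  forall l l1 l2, Forall2 R l l1 -> Forall2 S l l2 ->
  (forall a b c, In a l -> R a b -> S a c -> T b c) -> Forall2 T l1 l2.
Proof.
  induction l; intros l1 l2 H1 H2 H; inversion H1; inversion H2; subst; constructor.
  - eapply H; simpl; eauto.
  - apply IHl; auto. intros; eapply H; simpl; eauto.
Qed.

Definition p12 (t : var * var * var) : var * var := let '(a, b, c) := t in (a, b).
Definition p13 (t : var * var * var) : var * var := let '(a, b, c) := t in (a, c).
Definition p23 (t : var * var * var) : var * var := let '(a, b, c) := t in (b, c).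
Definition f1 (t : var * var * var) : var := let '(a, b, c) := t in a.

Definition idv : var -> var := fun x => x.

Lemma var_core tau e1 e2 x : forall t y1 y2,
  var_ok idv (map p12 t ++ e1) x y1 -> var_ok idv (map p13 t ++ e2) x y2 ->
  (~ In x (map f1 t) -> var_ok idv e1 x y1 -> var_ok idv e2 x y2 -> tau y1 = y2) ->
  var_ok tau (map p23 t) y1 y2.
Proof.
  induction t as [|[[a b] c] t IH]; simpl; intros y1 y2 H1 H2 H.
  - symmetry. auto.
  - destruct H1 as [[-> ->]|[Ha [Hb H1]]]; destruct H2 as [[E ->]|[Ha' [Hc H2]]]; auto; try congruence.
    right. split; auto. split; auto. apply IH; auto. intros; apply H; auto. intros [E|E]; auto.
Qed.

Lemma term_core tau e1 e2 : forall u t u1 u2,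
  alpha_term idv (map p12 t ++ e1) u u1 -> alpha_term idv (map p13 t ++ e2) u u2 ->
  (forall x y1 y2, In x (fv_term u) -> ~ In x (map f1 t) -> var_ok idv e1 x y1 -> var_ok idv e2 x y2 -> tau y1 = y2) ->
  alpha_term tau (map p23 t) u1 u2.
Proof.
  induction u as [x|f ts IH] using term_ind'; intros t u1 u2 H1 H2 H.
  - destruct u1; destruct u2; simpl in *; try tauto.
    eapply var_core; eauto.
  - destruct u1 as [|g us1]; [simpl in H1; tauto|]. destruct u2 as [|h us2]; [simpl in H2; tauto|].
    apply alpha_Fn in H1. apply alpha_Fn in H2. destruct H1 as [<- H1]. destruct H2 as [<- H2].
    apply alpha_Fn. split; auto.
    eapply Forall2_comb; eauto. intros a b c Ha Hb Hc.
    rewrite Forall_forall in IH. eapply IH; eauto.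
    intros; eapply H; eauto. rewrite fv_Fn. apply in_flat_map. eauto.
Qed.

Lemma form_core tau e1 e2 : forall A t A1 A2,
  alpha_form idv (map p12 t ++ e1) A A1 -> alpha_form idv (map p13 t ++ e2) A A2 ->
  (forall x y1 y2, In x (fv_form A) -> ~ In x (map f1 t) -> var_ok idv e1 x y1 -> var_ok idv e2 x y2 -> tau y1 = y2) ->
  alpha_form tau (map p23 t) A1 A2.
Proof.
  induction A as [p ts|A IHA B IHB|x A IH]; intros t A1 A2 H1 H2 H.
  - destruct A1; destruct A2; simpl in *; try tauto.
    destruct H1 as [<- [L1 F1]]. destruct H2 as [<- [L2 F2]].
    split; auto. split. { apply Forall2_length in F1. apply Forall2_length in F2. congruence. }
    eapply Forall2_comb; eauto. intros a b c Ha Hb Hc. eapply term_core; eauto.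
    intros; eapply H; eauto. apply in_flat_map; eauto.
  - destruct A1; destruct A2; simpl in *; try tauto.
    destruct H1, H2. split; [eapply IHA|eapply IHB]; eauto; intros; eapply H; eauto; apply in_or_app; auto.
  - destruct A1 as [| |y1 A1]; destruct A2 as [| |y2 A2]; simpl in H1, H2; try tauto.
    simpl. apply (IH (((x, y1), y2) :: t)); auto.
    intros x0 z1 z2 Hx Hn. apply H; auto.
    + apply in_fv_All. split; auto. intro; subst; apply Hn; simpl; auto.
    + intro; apply Hn; simpl; auto.
Qed.

Lemma var_agree s s' e x y : var_ok s e x y -> (~ In x (map fst e) -> s x = s' x) -> var_ok s' e x y.
Proof.
  induction e as [|[a b] e IH]; simpl; intros H Hs.
  - rewrite <- Hs; auto.
  - destruct H as [H|[Ha [Hb H]]]; auto. right. split; auto. split; auto.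
    apply IH; auto. intro; apply Hs. intros [E|E]; auto.
Qed.

Lemma term_agree s s' : forall u e u', alpha_term s e u u' ->
  (forall x, In x (fv_term u) -> ~ In x (map fst e) -> s x = s' x) -> alpha_term s' e u u'.
Proof.
  induction u as [x|f ts IH] using term_ind'; intros e u' H Hs.
  - destruct u'; simpl in *; try tauto. eapply var_agree; eauto.
  - destruct u' as [|g us]; [simpl in H; tauto|]. apply alpha_Fn in H. destruct H as [<- H].
    apply alpha_Fn. split; auto. rewrite Forall_forall in IH.
    clear -IH H Hs. revert us H IH Hs. induction ts; intros us H IH Hs; inversion H; subst; constructor.
    + apply IH; simpl; auto. intros; apply Hs; auto. rewrite fv_Fn; simpl; apply in_or_app; auto.
    + apply IHts; auto. intros; apply IH; simpl; auto.
      intros; apply Hs; auto. rewrite fv_Fn in *; simpl; apply in_or_app; auto.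
Qed.

Lemma form_agree s s' : forall A e B, alpha_form s e A B ->
  (forall x, In x (fv_form A) -> ~ In x (map fst e) -> s x = s' x) -> alpha_form s' e A B.
Proof.
  induction A as [p ts|A IHA B IHB|x A IH]; intros e A' H Hs.
  - destruct A'; simpl in *; try tauto. destruct H as [<- [L F]]. split; auto. split; auto.
    clear L. revert l F Hs. induction ts; intros us F Hs; inversion F; subst; constructor.
    + eapply term_agree; eauto. intros; apply Hs; auto. simpl; apply in_or_app; auto.
    + apply IHts; auto. intros; apply Hs; auto. simpl; apply in_or_app; auto.
  - destruct A'; simpl in *; try tauto. destruct H; split; [eapply IHA|eapply IHB]; eauto;
    intros; apply Hs; auto; apply in_or_app; auto.
  - destruct A' as [| |y A']; simpl in *; try tauto. apply IH; auto.
    intros z Hz Hn. apply Hs.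
    + apply filter_In. split; auto. destruct (Nat.eqb_spec z x); simpl; auto. subst; exfalso; apply Hn; simpl; auto.
    + intro; apply Hn; simpl; auto.
Qed.

Lemma term_fvp s : forall u e u' x, alpha_term s e u u' -> In x (fv_term u) ->
  exists y, var_ok s e x y /\ In y (fv_term u').
Proof.
  induction u as [z|f ts IH] using term_ind'; intros e u' x H Hx.
  - destruct u'; simpl in *; try tauto. destruct Hx as [<-|[]]. exists v; auto.
  - destruct u' as [|g us]; [simpl in H; tauto|]. apply alpha_Fn in H. destruct H as [<- H].
    rewrite fv_Fn in *. apply in_flat_map in Hx. destruct Hx as [a [Ha Hx]].
    rewrite Forall_forall in IH.
    clear -IH H Ha Hx. induction H; [inversion Ha|].
    destruct Ha as [<-|Ha].
    + destruct (IH x0 (or_introl eq_refl) e y x H Hx) as [w [W1 W2]]. exists w; split; auto. simpl; apply in_or_app; auto.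
    + destruct IHForall2 as [w [W1 W2]]; auto. { intros; eapply IH; simpl; eauto. }
      exists w; split; auto. simpl; apply in_or_app; auto.
Qed.

Lemma form_fvp s : forall A e B x, alpha_form s e A B -> In x (fv_form A) ->
  exists y, var_ok s e x y /\ In y (fv_form B).
Proof.
  induction A as [p ts|A IHA B IHB|z A IH]; intros e B' x H Hx.
  - destruct B'; simpl in *; try tauto. destruct H as [<- [L F]].
    apply in_flat_map in Hx. destruct Hx as [a [Ha Hx]].
    clear L. induction F; [inversion Ha|].
    destruct Ha as [<-|Ha].
    + destruct (term_fvp s _ _ _ _ H Hx) as [w [W1 W2]]. exists w; split; auto. simpl; apply in_or_app; auto.
    + destruct IHF as [w [W1 W2]]; auto. exists w; split; auto. simpl; apply in_or_app; auto.
  - destruct B'; simpl in *; try tauto. destruct H. apply in_app_or in Hx. destruct Hx as [Hx|Hx].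
    + destruct (IHA _ _ _ H Hx) as [w [W1 W2]]. exists w; split; auto; apply in_or_app; auto.
    + destruct (IHB _ _ _ H0 Hx) as [w [W1 W2]]. exists w; split; auto; apply in_or_app; auto.
  - destruct B' as [| |y B']; simpl in H; try tauto. apply in_fv_All in Hx. destruct Hx as [Hx Hne].
    destruct (IH _ _ _ H Hx) as [w [W1 W2]]. simpl in W1.
    destruct W1 as [[E _]|[_ [Hb W1]]]; [congruence|].
    exists w; split; auto. apply in_fv_All; auto.
Qed.

Scheme ai_ind := Induction for alpha_item Sort Prop
with ac_ind := Induction for alpha_ctx Sort Prop
with al_ind := Induction for alpha_list Sort Prop.

Lemma ac_of_list s e X Y : alpha_list s e X Y -> alpha_ctx s e X Y.
Proof. intro H. econstructor; eauto. Qed.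

Lemma ac_perm_r s e X Y Y' : alpha_ctx s e X Y -> Permutation Y Y' -> alpha_ctx s e X Y'.
Proof. intros H P. inversion H; subst. econstructor; eauto. eapply perm_trans; eauto. Qed.

Lemma al_perm_l s e X X' : Permutation X X' -> forall Y, alpha_list s e X Y ->
  exists Y', alpha_list s e X' Y' /\ Permutation Y Y'.
Proof.
  induction 1 as [|x l l' P IHP|x y l|l l' l'' P1 IH1 P2 IH2]; intros Y HY.
  - inversion HY; subst. exists []; split; constructor.
  - inversion HY as [|e0 i0 j G0 G'0 Hij HG]; subst. destruct (IHP _ HG) as [Y' [A P']].
    exists (j :: Y'). split; constructor; auto.
  - inversion HY as [|e0 i0 j G0 G'0 Hij HG]; subst. inversion HG as [|e1 i1 j1 G1 G1' Hij1 HG1]; subst. exists (j1 :: j :: G1'). split.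
    + repeat constructor; auto.
    + apply perm_swap.
  - destruct (IH1 _ HY) as [Y1 [A1 Q1]]. destruct (IH2 _ A1) as [Y2 [A2 Q2]].
    exists Y2; split; auto. eapply perm_trans; eauto.
Qed.

Lemma ac_perm_l s e X X' Y : alpha_ctx s e X Y -> Permutation X X' -> alpha_ctx s e X' Y.
Proof.
  intros H P. inversion H; subst. destruct (al_perm_l _ _ _ _ P _ H0) as [Y' [A P']].
  econstructor; eauto. eapply perm_trans; [apply Permutation_sym|]; eauto.
Qed.

Lemma al_app s e X Y X' Y' : alpha_list s e X Y -> alpha_list s e X' Y' -> alpha_list s e (X ++ X') (Y ++ Y').
Proof. induction 1; simpl; auto. intros; constructor; auto. Qed.

Lemma ac_app s e X Y X' Y' : alpha_ctx s e X Y -> alpha_ctx s e X' Y' -> alpha_ctx s e (X ++ X') (Y ++ Y').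
Proof.
  intros H H'. inversion H; inversion H'; subst. econstructor. apply al_app; eauto.
  apply Permutation_app; auto.
Qed.

Lemma al_app_inv s e X X' L : alpha_list s e (X ++ X') L ->
  exists L1 L2, L = L1 ++ L2 /\ alpha_list s e X L1 /\ alpha_list s e X' L2.
Proof.
  revert L; induction X; simpl; intros L H.
  - exists [], L. split; auto. split; auto. constructor.
  - inversion H; subst. destruct (IHX _ H5) as [L1 [L2 [-> [A B]]]].
    exists (j :: L1), L2. split; auto. split; auto. constructor; auto.
Qed.

Lemma flat_agree s s' : forall F Y, alpha_list s [] (map IForm F) Y ->
  (forall A x, In A F -> In x (fv_form A) -> s x = s' x) -> alpha_list s' [] (map IForm F) Y.
Proof.
  induction F; simpl; intros Y H Hs; inversion H; subst; constructor.
  - inversion H3; subst. constructor. eapply form_agree; eauto.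
  - apply IHF; eauto.
Qed.

Lemma flat_agree_c s s' F Y : alpha_ctx s [] (map IForm F) Y ->
  (forall A x, In A F -> In x (fv_form A) -> s x = s' x) -> alpha_ctx s' [] (map IForm F) Y.
Proof.
  intros H Hs. inversion H; subst. econstructor; eauto. eapply flat_agree; eauto.
Qed.

Lemma fvp_all s :
  (forall e i j, alpha_item s e i j -> forall x, In x (fv_item i) -> exists y, var_ok s e x y /\ In y (fv_item j)) /\
  (forall e G G', alpha_ctx s e G G' -> forall x, In x (fv_ctx G) -> exists y, var_ok s e x y /\ In y (fv_ctx G')) /\
  (forall e G G', alpha_list s e G G' -> forall x, In x (fv_ctx G) -> exists y, var_ok s e x y /\ In y (fv_ctx G')).
Proof.
  split; [|split].
  1: apply (ai_ind s (fun e i j _ => forall x, In x (fv_item i) -> exists y, var_ok s e x y /\ In y (fv_item j))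
         (fun e G G' _ => forall x, In x (fv_ctx G) -> exists y, var_ok s e x y /\ In y (fv_ctx G'))
         (fun e G G' _ => forall x, In x (fv_ctx G) -> exists y, var_ok s e x y /\ In y (fv_ctx G'))).
  6: apply (ac_ind s (fun e i j _ => forall x, In x (fv_item i) -> exists y, var_ok s e x y /\ In y (fv_item j))
         (fun e G G' _ => forall x, In x (fv_ctx G) -> exists y, var_ok s e x y /\ In y (fv_ctx G'))
         (fun e G G' _ => forall x, In x (fv_ctx G) -> exists y, var_ok s e x y /\ In y (fv_ctx G'))).
  11: apply (al_ind s (fun e i j _ => forall x, In x (fv_item i) -> exists y, var_ok s e x y /\ In y (fv_item j))
         (fun e G G' _ => forall x, In x (fv_ctx G) -> exists y, var_ok s e x y /\ In y (fv_ctx G'))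
         (fun e G G' _ => forall x, In x (fv_ctx G) -> exists y, var_ok s e x y /\ In y (fv_ctx G'))).
  all: clear.
  all: try solve [
    intros e A B H x Hx; simpl in *; eapply form_fvp; eauto ].
  all: try solve [
    intros e V V' G G' m [N1 [N2 [B1 B2]]] _ IH x Hx;
    apply in_fv_IBr in Hx; destruct Hx as [Hx Hn];
    destruct (IH x Hx) as [y [Y1 Y2]];
    destruct (var_ok_app _ _ _ _ _ Y1) as [Hm|[Hm1 [Hm2 Y3]]];
    [ exfalso; apply Hn; apply B1; apply (in_map fst) in Hm; exact Hm
    | exists y; split; auto; apply in_fv_IBr; split; auto; rewrite B2; auto ] ].
  all: try solve [
    intros e G G1 G' _ IH P x Hx; destruct (IH x Hx) as [y [Y1 Y2]]; exists y; split; auto;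
    unfold fv_ctx in *; eapply Permutation_in; [apply perm_fm; exact P|exact Y2] ].
  all: try solve [ intros e x []; simpl ].
  all: try solve [
    intros e i j G G' _ IH1 _ IH2 x Hx; unfold fv_ctx in *; simpl in *; apply in_app_or in Hx;
    destruct Hx as [Hx|Hx];
    [ destruct (IH1 x Hx) as [y [Y1 Y2]] | destruct (IH2 x Hx) as [y [Y1 Y2]] ];
    exists y; split; auto; apply in_or_app; auto ].
Qed.

Lemma erase_fv_item : forall i A x, In A (erase_item i) -> In x (fv_form A) ->
  In x (fv_item i) \/ In x (bv_item i).
Proof.
  induction i as [B|V G IH] using item_ind'; intros A x HA Hx.
  - simpl in HA. destruct HA as [<-|[]]. left; exact Hx.
  - rewrite erase_IBr in HA. rewrite bv_IBr. rewrite in_fv_IBr.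
    unfold erase_ctx in HA. apply in_flat_map in HA. destruct HA as [i [Hi HA]].
    rewrite Forall_forall in IH. destruct (IH i Hi A x HA Hx) as [H|H].
    + destruct (in_dec Nat.eq_dec x V) as [Hv|Hv].
      * right. apply in_or_app; auto.
      * left. split; auto. apply in_flat_map; eauto.
    + right. apply in_or_app; right. apply in_flat_map; eauto.
Qed.

Lemma erase_fv L A x : In A (erase_ctx L) -> In x (fv_form A) -> In x (fv_ctx L) \/ In x (bv_ctx L).
Proof.
  unfold erase_ctx, fv_ctx, bv_ctx. intros HA Hx. apply in_flat_map in HA. destruct HA as [i [Hi HA]].
  destruct (erase_fv_item i A x HA Hx); [left|right]; apply in_flat_map; eauto.
Qed.

Lemma nodup_disj (l l' : list var) x : NoDup (l ++ l') -> In x l -> In x l' -> False.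
Proof.
  induction l; simpl; intros N H1 H2; [tauto|]. inversion N; subst.
  destruct H1 as [<-|H1]; eauto. apply H3. apply in_or_app; auto.
Qed.

Definition wf (L : list item) := NoDup (bv_ctx L) /\ (forall x, In x (bv_ctx L) -> ~ In x (fv_ctx L)).

Lemma bv_app L L' : bv_ctx (L ++ L') = bv_ctx L ++ bv_ctx L'.
Proof. unfold bv_ctx. apply flat_map_app. Qed.
Lemma fv_app L L' : fv_ctx (L ++ L') = fv_ctx L ++ fv_ctx L'.
Proof. unfold fv_ctx. apply flat_map_app. Qed.
Lemma erase_app L L' : erase_ctx (L ++ L') = erase_ctx L ++ erase_ctx L'.
Proof. unfold erase_ctx. apply flat_map_app. Qed.

Lemma wf_app_l L L' : wf (L ++ L') -> wf L.
Proof.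
  intros [N D]. rewrite bv_app, fv_app in *. split.
  - eapply NoDup_app_remove_r; eauto.
  - intros x H1 H2. apply (D x); apply in_or_app; auto.
Qed.
Lemma wf_app_r L L' : wf (L ++ L') -> wf L'.
Proof.
  intros [N D]. rewrite bv_app, fv_app in *. split.
  - eapply NoDup_app_remove_l; eauto.
  - intros x H1 H2. apply (D x); apply in_or_app; auto.
Qed.
Lemma wf_perm L L' : Permutation L L' -> wf L -> wf L'.
Proof.
  intros P [N D]. split.
  - eapply Permutation_NoDup; [apply perm_fm; exact P|exact N].
  - intros x H1 H2. apply (D x).
    + eapply Permutation_in; [apply perm_fm; apply Permutation_sym; exact P|exact H1].
    + eapply Permutation_in; [apply perm_fm; apply Permutation_sym; exact P|exact H2].
Qed.

Lemma bv_single i : bv_ctx [i] = bv_item i.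
Proof. unfold bv_ctx; simpl; apply app_nil_r. Qed.
Lemma fv_single i : fv_ctx [i] = fv_item i.
Proof. unfold fv_ctx; simpl; apply app_nil_r. Qed.
Lemma erase_single i : erase_ctx [i] = erase_item i.
Proof. unfold erase_ctx; simpl; apply app_nil_r. Qed.

Lemma wf_br V G : wf [IBr V G] -> wf G.
Proof.
  intros [N D]. rewrite bv_single, fv_single, bv_IBr in *. split.
  - eapply NoDup_app_remove_l; eauto.
  - intros x H1 H2. destruct (in_dec Nat.eq_dec x V) as [Hv|Hv].
    + exact (nodup_disj _ _ x N Hv H1).
    + apply (D x). apply in_or_app; auto. apply in_fv_IBr; auto.
Qed.

Lemma glue tau La Lb Ya Yb sa sb : wf (La ++ Lb) ->
  (forall y, ~ In y (bv_ctx La) -> sa y = tau y) ->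
  (forall y, ~ In y (bv_ctx Lb) -> sb y = tau y) ->
  alpha_ctx sa [] (map IForm (erase_ctx La)) Ya ->
  alpha_ctx sb [] (map IForm (erase_ctx Lb)) Yb ->
  exists s, (forall y, ~ In y (bv_ctx (La ++ Lb)) -> s y = tau y) /\
    alpha_ctx s [] (map IForm (erase_ctx (La ++ Lb))) (Ya ++ Yb).
Proof.
  intros W Ha Hb A B. destruct W as [N D]. rewrite bv_app, fv_app in *.
  exists (fun y => if in_dec Nat.eq_dec y (bv_ctx La) then sa y else sb y). split.
  - intros y Hy. destruct (in_dec Nat.eq_dec y (bv_ctx La)).
    + exfalso; apply Hy; apply in_or_app; auto.
    + apply Hb. intro; apply Hy; apply in_or_app; auto.
  - rewrite erase_app, map_app. apply ac_app.
    + eapply flat_agree_c; eauto. intros F x HF Hx.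
      destruct (in_dec Nat.eq_dec x (bv_ctx La)) as [Hi|Hi]; auto.
      destruct (erase_fv _ _ _ HF Hx) as [Hf|Hf]; [|tauto].
      rewrite Hb, Ha; auto.
      intro Hbb. apply (D x); apply in_or_app; auto.
    + eapply flat_agree_c; eauto. intros F x HF Hx.
      destruct (in_dec Nat.eq_dec x (bv_ctx La)) as [Hi|Hi]; auto.
      exfalso. destruct (erase_fv _ _ _ HF Hx) as [Hf|Hf].
      * apply (D x); apply in_or_app; auto.
      * exact (nodup_disj _ _ x N Hi Hf).
Qed.

Definition Htau (tau : var -> var) e1 e2 (S : list var) :=
  forall x y1 y2, In x S -> var_ok idv e1 x y1 -> var_ok idv e2 x y2 -> tau y1 = y2.

Definition Concl (tau : var -> var) L1 L2 :=
  exists s, (forall y, ~ In y (bv_ctx L1) -> s y = tau y) /\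
    alpha_ctx s [] (map IForm (erase_ctx L1)) (map IForm (erase_ctx L2)).

Lemma Concl_perm tau L1 L2 G1 G2 : Permutation L1 G1 -> Permutation L2 G2 -> Concl tau L1 L2 -> Concl tau G1 G2.
Proof.
  intros P1 P2 [s [Hs A]]. exists s. split.
  - intros y Hy. apply Hs. intro H; apply Hy.
    eapply Permutation_in; [apply perm_fm; exact P1|exact H].
  - eapply ac_perm_l; [eapply ac_perm_r; [exact A|]|].
    + apply Permutation_map. apply perm_fm. exact P2.
    + apply Permutation_map. apply perm_fm. exact P1.
Qed.

Definition Pi e1 i j1 := forall e2 j2 tau, alpha_item idv e2 i j2 -> wf [j1] ->
  Htau tau e1 e2 (fv_item i) -> Concl tau [j1] [j2].
Definition Pc e1 G G1 := forall e2 G2 tau, alpha_ctx idv e2 G G2 -> wf G1 ->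
  Htau tau e1 e2 (fv_ctx G) -> Concl tau G1 G2.
Definition Pl e1 G G1 := forall e2 G2 tau, alpha_list idv e2 G G2 -> wf G1 ->
  Htau tau e1 e2 (fv_ctx G) -> Concl tau G1 G2.

Lemma core_ctx : forall e1 G G1, alpha_ctx idv e1 G G1 -> Pc e1 G G1.
Proof.
  apply (ac_ind idv (fun e i j _ => Pi e i j) (fun e G G' _ => Pc e G G') (fun e G G' _ => Pl e G G')).
  -
    intros e1 A A1 HA e2 j2 tau H2 W H. inversion H2; subst.
    exists tau. split; auto. unfold erase_ctx; simpl.
    apply ac_of_list. constructor; [|constructor]. constructor.
    apply (form_core tau e1 e2 A [] A1 B); simpl; auto.
    intros; eapply H; eauto.
  -
    intros e1 V V1 G G1 m1 [N1 [N1' [B1 B1']]] a IH e2 j2 tau H2 W H.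
    inversion H2 as [|e0 V0 V2 G0 G2 m2 [N2 [N2' [B2 B2']]] a2]; subst.
    set (tau' := fun y => match rlk m1 y with
                          | Some x => match lk m2 x with Some z => z | None => y end
                          | None => tau y end).
    destruct (IH (m2 ++ e2) G2 tau' a2 (wf_br _ _ W)) as [s [Hs A]].
    + intros x y1 y2 Hx Y1 Y2.
      destruct (var_ok_app _ _ _ _ _ Y1) as [M1|[M1a [M1b M1c]]];
      destruct (var_ok_app _ _ _ _ _ Y2) as [M2|[M2a [M2b M2c]]].
      * unfold tau'. rewrite (rlk_in _ _ _ N1' M1). rewrite (lk_in _ _ _ N2 M2). auto.
      * exfalso. apply M2a. apply B2. apply B1. apply (in_map fst) in M1. exact M1.
      * exfalso. apply M1a. apply B1. apply B2. apply (in_map fst) in M2. exact M2.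
      * unfold tau'. rewrite (rlk_notin _ _ M1b). eapply H; eauto.
        apply in_fv_IBr. split; auto. rewrite B1; auto.
    + exists s. split.
      * intros y Hy. rewrite Hs. 
        -- unfold tau'. rewrite rlk_notin; auto. rewrite <- B1'. intro; apply Hy.
           rewrite bv_single, bv_IBr. apply in_or_app; auto.
        -- intro; apply Hy. rewrite bv_single, bv_IBr. apply in_or_app; auto.
      * rewrite !erase_single, !erase_IBr. exact A.
  -
    intros e1 G L1 G1 a IH P e2 G2 tau H2 W H.
    inversion H2 as [e0 G0 L2 G2' a2 P2]; subst.
    eapply Concl_perm; [exact P|exact P2|].
    apply (IH e2 L2 tau a2); auto.
    eapply wf_perm; [apply Permutation_sym; exact P|exact W].
  -
    intros e1 e2 G2 tau H2 W H. inversion H2; subst.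
    exists tau. split; auto. apply ac_of_list. constructor.
  -
    intros e1 i j G G' a IHi b IHG e2 L2 tau H2 W H.
    inversion H2 as [|e0 i0 j2 G0 G2' a2 b2]; subst.
    change (j :: G') with ([j] ++ G') in W.
    destruct (IHi e2 j2 tau a2 (wf_app_l _ _ W)) as [sa [Ha Aa]].
    { intros x y1 y2 Hx; apply H. unfold fv_ctx; simpl; apply in_or_app; auto. }
    destruct (IHG e2 G2' tau b2 (wf_app_r _ _ W)) as [sb [Hb Ab]].
    { intros x y1 y2 Hx; apply H. unfold fv_ctx; simpl; apply in_or_app; auto. }
    destruct (glue tau [j] G' _ _ sa sb W Ha Hb Aa Ab) as [s [Hs As]].
    exists s. split; auto.
    replace (map IForm (erase_ctx (j2 :: G2'))) with
      (map IForm (erase_ctx [j2]) ++ map IForm (erase_ctx G2')).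
    + exact As.
    + rewrite <- map_app, <- erase_app. reflexivity.
Qed.

Lemma assemble G D A V Ga Db W m Gb Da W' m' A1 A2 Src Tgt :
  (forall x, In x V -> ~ In x (fv_form A)) ->
  alpha_ctx idv [] G Ga -> bijection_between m V W -> alpha_ctx idv (m ++ []) D Db ->
  bijection_between m' V W' -> alpha_ctx idv (m' ++ []) G Gb -> alpha_ctx idv [] D Da ->
  alpha_form idv [] A A1 -> alpha_form idv [] A A2 ->
  Permutation (Ga ++ [IBr W Db]) Src -> Permutation (IBr W' Gb :: Da) Tgt ->
  wf Src -> (forall x, In x (bv_ctx Src) -> ~ In x (fv_form A1)) ->
  exists s, alpha_ctx s [] (map IForm (erase_ctx Src)) (map IForm (erase_ctx Tgt)) /\ alpha_form s [] A1 A2.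
Proof.
  intros HA HG [N1 [N1' [B1 B1']]] HD [N2 [N2' [B2 B2']]] HGb HDa HA1 HA2 PS PT WS DA.
  assert (WL : wf (Ga ++ [IBr W Db])) by (eapply wf_perm; [apply Permutation_sym; exact PS|exact WS]).
  assert (Wbv : forall w, In w W -> In w (bv_ctx (Ga ++ [IBr W Db]))).
  { intros w Hw. rewrite bv_app, bv_single, bv_IBr. apply in_or_app; right; apply in_or_app; auto. }
  assert (Sbv : forall y, In y (bv_ctx Src) -> In y (bv_ctx (Ga ++ [IBr W Db]))).
  { intros y Hy. eapply Permutation_in; [apply perm_fm; apply Permutation_sym; exact PS|exact Hy]. }
  assert (Sbv' : forall y, In y (bv_ctx (Ga ++ [IBr W Db])) -> In y (bv_ctx Src)).
  { intros y Hy. eapply Permutation_in; [apply perm_fm; exact PS|exact Hy]. }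
  set (tau := fun y => match rlk m y with Some x => x
                       | None => match lk m' y with Some z => z | None => y end end).
  destruct (core_ctx [] G Ga HG (m' ++ []) Gb tau HGb (wf_app_l _ _ WL)) as [sG [HsG AG]].
  { intros x y1 y2 Hx Y1 Y2. simpl in Y1. unfold idv in Y1. subst y1.
    assert (Hw : ~ In x W).
    { intros Hw. destruct (proj1 (proj2 (fvp_all idv)) _ _ _ HG x Hx) as [y [Y Hy]].
      simpl in Y. unfold idv in Y. subst y.
      destruct WL as [_ DL]. apply (DL x (Wbv x Hw)). rewrite fv_app. apply in_or_app; auto. }
    unfold tau. rewrite rlk_notin by (rewrite <- B1'; exact Hw).
    destruct (var_ok_app _ _ _ _ _ Y2) as [M|[Ma [Mb Mc]]].
    - rewrite (lk_in _ _ _ N2 M). auto.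
    - rewrite lk_notin by exact Ma. simpl in Mc. exact (eq_sym Mc). }
  destruct (core_ctx (m ++ []) D Db HD [] Da tau HDa (wf_br _ _ (wf_app_r _ _ WL))) as [sD [HsD AD]].
  { intros x y1 y2 Hx Y1 Y2. simpl in Y2. subst y2.
    destruct (var_ok_app _ _ _ _ _ Y1) as [M|[Ma [Mb Mc]]].
    - unfold tau. rewrite (rlk_in _ _ _ N1' M). auto.
    - simpl in Mc. subst y1. unfold tau, idv. rewrite rlk_notin by exact Mb.
      rewrite lk_notin; auto. rewrite <- B2, B1. exact Ma. }
  assert (HsD' : forall y, ~ In y (bv_ctx [IBr W Db]) -> sD y = tau y).
  { intros y Hy. apply HsD. intro; apply Hy. rewrite bv_single, bv_IBr; apply in_or_app; auto. }
  assert (AD' : alpha_ctx sD [] (map IForm (erase_ctx [IBr W Db])) (map IForm (erase_ctx Da))).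
  { rewrite erase_single, erase_IBr. exact AD. }
  destruct (glue tau Ga [IBr W Db] _ _ sG sD WL HsG HsD' AG AD') as [s [Hs As]].
  exists s. split.
  - eapply ac_perm_l; [eapply ac_perm_r; [exact As|]|].
    + replace (map IForm (erase_ctx Gb) ++ map IForm (erase_ctx Da)) with (map IForm (erase_ctx (IBr W' Gb :: Da))).
      * apply Permutation_map. apply perm_fm. exact PT.
      * change (erase_ctx (IBr W' Gb :: Da)) with (erase_item (IBr W' Gb) ++ erase_ctx Da). rewrite erase_IBr, map_app. reflexivity.
    + apply Permutation_map. apply perm_fm. exact PS.
  - assert (At : alpha_form tau [] A1 A2).
    { apply (form_core tau [] [] A [] A1 A2); simpl; auto.
      intros x y1 y2 Hx _ Y1 Y2. subst y1 y2. unfold tau, idv.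
      rewrite rlk_notin.
      - rewrite lk_notin; auto. rewrite <- B2. intro Hv. exact (HA x Hv Hx).
      - rewrite <- B1'. intro Hw.
        destruct (form_fvp idv A [] A1 x HA1 Hx) as [y [Y Hy]]. simpl in Y. unfold idv in Y. subst y.
        exact (DA x (Sbv' x (Wbv x Hw)) Hy). }
    eapply form_agree; [exact At|]. intros x Hx _. symmetry. apply Hs.
    intro Hb. exact (DA x (Sbv' x Hb) Hx).
Qed.

Theorem proposition6 (Gamma Delta : list item) (A : formula) (V : list var)
  (HA : forall x, In x V -> ~ In x (fv_form A))
  (S1 S2 : ljp_sequent) :
  is_flattening (Gamma ++ [IBr V Delta], A) S1 ->
  is_flattening (IBr V Gamma :: Delta, A) S2 ->
  abar_equiv S1 S2.
Proof.
  intros [[X1 A1] [[[C1 F1] [N1 D1]] ->]] [[X2 A2] [[[C2 F2] [N2 D2]] ->]].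
  simpl in *. unfold bv_seq, fv_seq in *; simpl in *.
  inversion C1 as [e0 G0 L1 G' AL1 P1]; subst.
  destruct (al_app_inv _ _ _ _ _ AL1) as [La [Lb [-> [ALa ALb]]]].
  inversion ALb as [|e1 i1 j1 G1 G1' Hj1 Hnil]; subst. inversion Hnil; subst.
  inversion Hj1 as [|e3 V0 V1 G3 Delta1 m1 B1 AD1]; subst.
  inversion C2 as [e4 G4 L2 G'' AL2 P2]; subst.
  inversion AL2 as [|e5 i5 j5 G5 Lr Hj2 ALr]; subst.
  inversion Hj2 as [|e6 V6 V2 G6 Gamma2 m2 B2 AG2]; subst.
  assert (W1 : wf X1).
  { split. eapply NoDup_app_remove_r; exact N1.
    intros x H1 H2. apply (D1 x); apply in_or_app; auto. }
  assert (W2 : wf X2).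
  { split. eapply NoDup_app_remove_r; exact N2.
    intros x H1 H2. apply (D2 x); apply in_or_app; auto. }
  assert (DA1 : forall x, In x (bv_ctx X1) -> ~ In x (fv_form A1)).
  { intros x H1 H2. apply (D1 x); apply in_or_app; auto. }
  assert (DA2 : forall x, In x (bv_ctx X2) -> ~ In x (fv_form A2)).
  { intros x H1 H2. apply (D2 x); apply in_or_app; auto. }
  destruct (assemble Gamma Delta A V La Delta1 V1 m1 Gamma2 Lr V2 m2 A1 A2 X1 X2 HA
    (ac_of_list _ _ _ _ ALa) B1 AD1 B2 AG2 (ac_of_list _ _ _ _ ALr) F1 F2 P1 P2 W1 DA1) as [s [S1 S2]].
  destruct (assemble Delta Gamma A V Lr Gamma2 V2 m2 Delta1 La V1 m1 A2 A1 X2 X1 HA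
    (ac_of_list _ _ _ _ ALr) B2 AG2 B1 AD1 (ac_of_list _ _ _ _ ALa) F2 F1
    (perm_trans (Permutation_sym (Permutation_cons_append _ _)) P2)
    (perm_trans (Permutation_cons_append _ _) P1) W2 DA2) as [s' [S1' S2']].
  exists s, s'. unfold alpha_seq_sub, lift_seq. simpl. auto.
Qed.
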